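(* Let $\mathcal{M}'$ be an RRSF mechanism with respect to coefficients $\mathbf{W}=\{W^k_{i,j}\}_{k\in[n],i,j\in[m_k]}$, with parameters $(q^*,\mu^*,\pi^* )$, i.e. for each agent $k$, $q^*$ is an optimal solution of $(P^3)$ with coefficients $W^k$ and $(\mu^*,\pi^* )$ together with some $\lambda^*$ satisfy the KKT conditions of $(P^3)$ at $q^*$. Then for every agent $k$ and $i\in[m_k]$, $\sum_{j\in[m_k]}q^*_{i,j}W^k_{i,j}-\hat p_k(t_k^{(i)})\ge0$.
   Context: Agent $k$ has type support $\{t_k^{(1)},\dots,t_k^{(m_k)}\}$ with probabilities $F_i>0$; coefficients $W^k_{i,j}\in[-1,1]$. With $\gamma>0$, $\phi(\mathbf{q})=\frac12\gamma\|\mathbf{q}\|_2^2$; $(P^3)$: maximize $\sum_iF_i(\sum_jW_{i,j}q_{i,j}-\phi(\mathbf{q}_i))$ s.t. $\sum_jq_{i,j}=1$ ($\forall i$), $\sum_iF_iq_{i,j}=F_j$ ($\forall j$), $q_{i,j}\ge0$. KKT conditions: $F_i(W_{i,j}-\partial\phi(\mathbf{q}^*_i)/\partial q_{i,j})=\lambda^*_{i,j}+\mu^*_i+F_i\pi^*_j$, $\lambda^*_{i,j}\le0$, $\lambda^*_{i,j}q^*_{i,j}=0$ for all $i,j$. In the RRSF mechanism, agent $k$ reporting $t_k^{(i)}$ is represented by surrogate $t_k^{(j)}$ with probability $q^*_{i,j}$ in an underlying mechanism and additionally pays $\hat p_k(t_k^{(i)})=\sum_j\pi^*_jq^*_{i,j}+\phi(\mathbf{q}^*_i)-\phi(\mathbf{0})+\min_\ell\mu^*_\ell/F_\ell$.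 *)

(* Defs.v *)
From HB Require Import structures.
From mathcomp Require Import all_boot all_order all_algebra.
From mathcomp Require Import reals.
Set Implicit Arguments. Unset Strict Implicit. Unset Printing Implicit Defensive.
Import Order.TTheory GRing.Theory Num.Theory.
Local Open Scope ring_scope.

Section RRSF.
Variable R : realType.

Definition phi (gamma : R) (m : nat) (x : 'I_m -> R) : R :=
  2^-1 * gamma * \sum_(j < m) (x j) ^+ 2.

Definition P3_obj (gamma : R) (m : nat) (F : 'I_m -> R) (W q : 'M[R]_m) : R :=
  \sum_(i < m) F i * (\sum_(j < m) W i j * q i j - phi gamma (fun j => q i j)).

Definition P3_feasible (m : nat) (F : 'I_m -> R) (q : 'M[R]_m) : Prop :=
  (forall i, \sum_(j < m) q i j = 1) /\
  (forall j, \sum_(i < m) F i * q i j = F j) /\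
  (forall i j, 0 <= q i j).

Definition P3_optimal (gamma : R) (m : nat) (F : 'I_m -> R) (W q : 'M[R]_m) : Prop :=
  P3_feasible F q /\
  forall q' : 'M[R]_m, P3_feasible F q' -> P3_obj gamma F W q' <= P3_obj gamma F W q.

(* KKT conditions of (P^3) at q, with multipliers lambda, mu, pi.
   Here d phi(q_i)/d q_{i,j} = gamma * q_{i,j}. *)
Definition P3_KKT (gamma : R) (m : nat) (F : 'I_m -> R) (W q lam : 'M[R]_m)
    (mu pi : 'I_m -> R) : Prop :=
  forall i j,
    F i * (W i j - gamma * q i j) = lam i j + mu i + F i * pi j /\
    lam i j <= 0 /\ lam i j * q i j = 0.

(* min_l f l over the nonempty index set 'I_m (i witnesses nonemptiness;
   the value does not depend on i) *)
Definition min_over (m : nat) (f : 'I_m -> R) (i : 'I_m) : R :=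
  \big[Num.min/f i]_(l < m) f l.

Definition RRSF_payment (gamma : R) (m : nat) (F : 'I_m -> R) (q : 'M[R]_m)
    (mu pi : 'I_m -> R) (i : 'I_m) : R :=
  \sum_(j < m) pi j * q i j + phi gamma (fun j => q i j)
  - phi gamma (fun _ : 'I_m => 0) + min_over (fun l => mu l / F l) i.

End RRSF.

(* Main.v *)
Require Import Defs.
From HB Require Import structures.
From mathcomp Require Import all_boot all_order all_algebra.
From mathcomp Require Import reals.
From mathcomp Require Import ring lra.
Import Order.TTheory GRing.Theory Num.Theory.
Local Open Scope ring_scope.

Theorem mainTheorem14 (R : realType) (gamma : R) (n : nat) (m : 'I_n -> nat)
    (F : forall k : 'I_n, 'I_(m k) -> R)
    (W : forall k : 'I_n, 'M[R]_(m k))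
    (q lam : forall k : 'I_n, 'M[R]_(m k))
    (mu pi : forall k : 'I_n, 'I_(m k) -> R) :
  0 < gamma ->
  (forall k i, 0 < F k i) ->
  (forall k, \sum_(i < m k) F k i = 1) ->
  (forall k i j, -1 <= W k i j <= 1) ->
  (forall k, P3_optimal gamma (F k) (W k) (q k)) ->
  (forall k, P3_KKT gamma (F k) (W k) (q k) (lam k) (mu k) (pi k)) ->
  forall (k : 'I_n) (i : 'I_(m k)),
    0 <= \sum_(j < m k) q k i j * W k i j
         - RRSF_payment gamma (F k) (q k) (mu k) (pi k) i.
Proof.
move=> gpos Fpos _ _ opt kkt k i.
have Fi := Fpos k i.
have Fi0 : F k i != 0 by rewrite gt_eqF.
have [[rows _] _] := opt k.
have key : forall j, q k i j * W k i j - pi k j * q k i j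
   = gamma * q k i j ^+ 2 + q k i j * (mu k i / F k i).
  move=> j; have [e [_ lq]] := kkt k i j.
  have e2 : F k i * (q k i j * (W k i j - gamma * q k i j - pi k j))
     = q k i j * mu k i.
    have -> : F k i * (q k i j * (W k i j - gamma * q k i j - pi k j))
      = q k i j * (F k i * (W k i j - gamma * q k i j)) - F k i * pi k j * q k i j by ring.
    rewrite e; rewrite mulrDr mulrDr (mulrC (q k i j) (lam k i j)) lq. ring.
  have h : q k i j * (mu k i / F k i) = q k i j * (W k i j - gamma * q k i j - pi k j).
    by rewrite mulrA -e2; field.
  rewrite h; ring.
have hsum : \sum_(j < m k) q k i j * W k i j - \sum_(j < m k) pi k j * q k i j
   = gamma * \sum_(j < m k) q k i j ^+ 2 + mu k i / F k i.
  rewrite -sumrB (eq_bigr _ (fun j _ => key j)) big_split /= -mulr_sumr -mulr_suml rows mul1r.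
  by [].
have hmin : min_over (fun l => mu k l / F k l) i <= mu k i / F k i.
  rewrite /min_over; apply: (big_rec (fun x => x <= mu k i / F k i)) => //.
  by move=> l x _ hx; rewrite ge_min hx orbT.
have h0 : phi gamma (fun _ : 'I_(m k) => 0) = 0.
  by rewrite /phi big1 ?mulr0 // => j _; rewrite expr0n.
have hsq : 0 <= \sum_(j < m k) q k i j ^+ 2 by apply: sumr_ge0 => j _; exact: sqr_ge0.
rewrite /RRSF_payment h0 /phi.
set S := \sum_(j < m k) q k i j ^+ 2.
set M := min_over _ _.
have : 0 <= gamma * S by apply: mulr_ge0 => //; exact: ltW.
move: hsum hmin; rewrite -/S -/M.
set A := \sum_(j < m k) q k i j * W k i j.
set B := \sum_(j < m k) pi k j * q k i j.
move=> hs hm hg.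
have -> : A - (B + 2^-1 * gamma * S - 0 + M) = (A - B) - 2^-1 * (gamma * S) - M by ring.
rewrite hs.
have -> : gamma * S + mu k i / F k i - 2^-1 * (gamma * S) - M
  = 2^-1 * (gamma * S) + (mu k i / F k i - M) by field.
apply: addr_ge0; first by apply: mulr_ge0 => //; rewrite invr_ge0.
by rewrite subr_ge0.
Qed.
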